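(* Let $\Sigma$ be a finite group, $A$ a pseudofield, $\mathfrak m$ a maximal ideal of $A$, $K=A/\mathfrak m$, $L$ an algebraic closure of $K$, $\overline A=\operatorname{Fun}L$, and let $\Phi\colon A\to\overline A$ be the Taylor homomorphism at the identity associated to the composite $A\to K\to L$ (so $A$ is identified with the difference subring $\Phi(A)$ of $\overline A$). If $D$ is a difference closed pseudofield that is a difference subring of $\overline A$ with $\Phi(A)\subseteq D\subseteq\overline A$, then $D=\overline A$.
   Context: A difference ring is a commutative ring with identity with an action of the group $\Sigma$ by ring automorphisms. A pseudofield is an absolutely flat difference ring with no $\Sigma$-stable ideals other than $0$ and itself. $\operatorname{Fun}L$ is the ring of functions $\Sigma\to L$ with pointwise operations and $(\sigma f)(\tau)=f(\sigma^{-1}\tau)$. For a ring homomorphism $\varphi\colon A\to L$, the Taylor homomorphism at the identity $e$ is the unique difference homomorphism $\Phi\colon A\to\operatorname{Fun}L$ with $\Phi(a)(e)=\varphi(a)$, namely $\Phi(a)(\tau)=\varphi(\tau^{-1}a)$. A pseudofield $A$ is difference closed if for every $n$ and every $\Sigma$-stable ideal $\mathfrak a$ of the difference polynomial ring $A\{y_1,\dots,y_n\}$ (polynomial ring in the indeterminates $\sigma y_i$, with $\tau(\sigma y_i)=(\tau\sigma)y_i$) the radical of $\mathfrak a$ equals the set of difference polynomials vanishing at every common zero of $\mathfrak a$ in $A^n$ (evaluation via $\sigma y_i\mapsto\sigma(a_i)$). *)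

(* Defs.v *)
From HB Require Import structures.
From mathcomp Require Import all_boot all_order all_algebra all_fingroup.
Set Implicit Arguments. Unset Strict Implicit. Unset Printing Implicit Defensive.
Import GRing.Theory.
Local Open Scope ring_scope.

Definition diff_action (gT : finGroupType) (R : pzRingType) (act : gT -> R -> R) : Prop :=
  (forall x, act 1%g x = x) /\
  (forall s t x, act (s * t)%g x = act s (act t x)) /\
  (forall s x y, act s (x + y) = act s x + act s y) /\
  (forall s x y, act s (x * y) = act s x * act s y) /\
  (forall s, act s 1 = 1).

Definition diff_subring (gT : finGroupType) (R : pzRingType) (act : gT -> R -> R)
  (S : R -> Prop) : Prop :=
  S 0 /\ S 1 /\ (forall x, S x -> S (- x)) /\
  (forall x y, S x -> S y -> S (x + y)) /\
  (forall x y, S x -> S y -> S (x * y)) /\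
  (forall s x, S x -> S (act s x)).

Definition diff_ideal (gT : finGroupType) (R : pzRingType) (act : gT -> R -> R)
  (S I : R -> Prop) : Prop :=
  (forall x, I x -> S x) /\ I 0 /\
  (forall x y, I x -> I y -> I (x + y)) /\
  (forall r x, S r -> I x -> I (r * x)) /\
  (forall s x, I x -> I (act s x)).

(* Absolute flatness of the (commutative) ring S, in its von Neumann regular
   form: every a has b with a = a^2 b. *)
Definition abs_flat (R : pzRingType) (S : R -> Prop) : Prop :=
  forall a, S a -> exists b, S b /\ a = a * a * b.

Definition pseudofield (gT : finGroupType) (R : pzRingType) (act : gT -> R -> R)
  (S : R -> Prop) : Prop :=
  diff_subring act S /\ abs_flat S /\
  (forall I, diff_ideal act S I ->
     (forall x, I x <-> x = 0) \/ (forall x, I x <-> S x)).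

(* Difference polynomial ring R{y_1..y_n}: the polynomial ring over R  *)
(* in the indeterminates (sigma y_i), sigma in gT, i < n, presented as *)
(* formal terms modulo the congruence [deq] of commutative rings with  *)
(* R -> R{y} a ring homomorphism.  For a subring S of R, S{y} is       *)
(* identified with the terms all of whose constants lie in S.          *)
Inductive dterm (R : Type) (gT : Type) (n : nat) : Type :=
| TConst of R
| TVar of gT & 'I_n
| TAdd of dterm R gT n & dterm R gT n
| TMul of dterm R gT n & dterm R gT n
| TOpp of dterm R gT n.

Arguments TConst {R gT n}.
Arguments TVar {R gT n}.
Arguments TAdd {R gT n}.
Arguments TMul {R gT n}.
Arguments TOpp {R gT n}.

Inductive deq (R : pzRingType) (gT : Type) (n : nat) : dterm R gT n -> dterm R gT n -> Prop :=
| deq_refl t : deq t t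
| deq_sym t u : deq t u -> deq u t
| deq_trans t u v : deq t u -> deq u v -> deq t v
| deq_add t t' u u' : deq t t' -> deq u u' -> deq (TAdd t u) (TAdd t' u')
| deq_mul t t' u u' : deq t t' -> deq u u' -> deq (TMul t u) (TMul t' u')
| deq_opp t t' : deq t t' -> deq (TOpp t) (TOpp t')
| deq_addA t u v : deq (TAdd t (TAdd u v)) (TAdd (TAdd t u) v)
| deq_addC t u : deq (TAdd t u) (TAdd u t)
| deq_add0 t : deq (TAdd (TConst 0) t) t
| deq_addN t : deq (TAdd t (TOpp t)) (TConst 0)
| deq_mulA t u v : deq (TMul t (TMul u v)) (TMul (TMul t u) v)
| deq_mulC t u : deq (TMul t u) (TMul u t)
| deq_mul1 t : deq (TMul (TConst 1) t) t
| deq_mulDl t u v : deq (TMul (TAdd t u) v) (TAdd (TMul t v) (TMul u v))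
| deq_cadd a b : deq (TConst (a + b)) (TAdd (TConst a) (TConst b))
| deq_cmul a b : deq (TConst (a * b)) (TMul (TConst a) (TConst b))
| deq_copp a : deq (TConst (- a)) (TOpp (TConst a)).

Fixpoint tover (R : Type) (gT : Type) (n : nat) (S : R -> Prop) (t : dterm R gT n) : Prop :=
  match t with
  | TConst a => S a
  | TVar _ _ => True
  | TAdd t u => tover S t /\ tover S u
  | TMul t u => tover S t /\ tover S u
  | TOpp t => tover S t
  end.

Fixpoint tact (gT : finGroupType) (R : pzRingType) (n : nat) (act : gT -> R -> R)
  (s : gT) (t : dterm R gT n) : dterm R gT n :=
  match t with
  | TConst a => TConst (act s a)
  | TVar g i => TVar (s * g)%g i
  | TAdd t u => TAdd (tact act s t) (tact act s u)
  | TMul t u => TMul (tact act s t) (tact act s u)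
  | TOpp t => TOpp (tact act s t)
  end.

Fixpoint teval (gT : finGroupType) (R : pzRingType) (n : nat) (act : gT -> R -> R)
  (x : 'I_n -> R) (t : dterm R gT n) : R :=
  match t with
  | TConst a => a
  | TVar g i => act g (x i)
  | TAdd t u => teval act x t + teval act x u
  | TMul t u => teval act x t * teval act x u
  | TOpp t => - teval act x t
  end.

Definition tpow (R : pzRingType) (gT : Type) (n : nat) (t : dterm R gT n) (k : nat) : dterm R gT n :=
  iter k (TMul t) (TConst 1).

Definition tdiff_ideal (gT : finGroupType) (R : pzRingType) (act : gT -> R -> R)
  (S : R -> Prop) (n : nat) (P : dterm R gT n -> Prop) : Prop :=
  (forall t, P t -> tover S t) /\
  (forall t u, P t -> tover S u -> deq t u -> P u) /\
  P (TConst 0) /\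
  (forall t u, P t -> P u -> P (TAdd t u)) /\
  (forall t u, tover S t -> P u -> P (TMul t u)) /\
  (forall s t, P t -> P (tact act s t)).

Definition trad (R : pzRingType) (gT : Type) (n : nat) (S : R -> Prop)
  (P : dterm R gT n -> Prop) (t : dterm R gT n) : Prop :=
  tover S t /\ exists k, P (tpow t k).

Definition tvanish (gT : finGroupType) (R : pzRingType) (act : gT -> R -> R)
  (S : R -> Prop) (n : nat) (P : dterm R gT n -> Prop) (t : dterm R gT n) : Prop :=
  tover S t /\
  forall x : 'I_n -> R, (forall i, S (x i)) ->
    (forall u, P u -> teval act x u = 0) -> teval act x t = 0.

Definition diff_closed (gT : finGroupType) (R : pzRingType) (act : gT -> R -> R)
  (S : R -> Prop) : Prop :=
  forall (n : nat) (P : dterm R gT n -> Prop), tdiff_ideal act S P ->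
    forall t, trad S P t <-> tvanish act S P t.

Definition ring_ideal (R : pzRingType) (I : R -> Prop) : Prop :=
  I 0 /\ (forall x y, I x -> I y -> I (x + y)) /\ (forall r x, I x -> I (r * x)).

Definition maximal_ideal (R : pzRingType) (I : R -> Prop) : Prop :=
  ring_ideal I /\ ~ I 1 /\
  (forall J, ring_ideal J -> (forall x, I x -> J x) -> ~ J 1 -> forall x, J x -> I x).

Definition funact (gT : finGroupType) (L : pzRingType) (s : gT) (f : {ffun gT -> L})
  : {ffun gT -> L} := [ffun t => f (s^-1 * t)%g].

Definition taylor (gT : finGroupType) (A L : pzRingType) (actA : gT -> A -> A)
  (phi : A -> L) (a : A) : {ffun gT -> L} := [ffun t => phi (actA t^-1%g a)].

(* Main.v *)
Require Import Defs.
From HB Require Import structures.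
From mathcomp Require Import all_boot all_order all_algebra all_fingroup.
From Stdlib Require Import Classical.
Set Implicit Arguments. Unset Strict Implicit. Unset Printing Implicit Defensive.
Import GRing.Theory.
Local Open Scope ring_scope.

Section Basics.
Variables (gT : finGroupType) (L : fieldType).
Notation F := {ffun gT -> L}.
Implicit Types f g h : F.

Lemma fmulE f g t : (f * g) t = f t * g t. Proof. by rewrite ffunE. Qed.
Lemma faddE f g t : (f + g) t = f t + g t. Proof. by rewrite ffunE. Qed.
Lemma foppE f t : (- f) t = - f t. Proof. by rewrite ffunE. Qed.
Lemma f1E t : (1 : F) t = 1. Proof. by rewrite ffunE. Qed.
Lemma f0E t : (0 : F) t = 0. Proof. by rewrite ffunE. Qed.
Lemma fmulC f g : f * g = g * f.
Proof. by apply/ffunP => t; rewrite !fmulE mulrC. Qed.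

Lemma funactE s f t : funact s f t = f (s^-1 * t)%g. Proof. by rewrite ffunE. Qed.
Lemma funact1 f : funact 1%g f = f.
Proof. by apply/ffunP => t; rewrite funactE invg1 mul1g. Qed.
Lemma funactM s u f : funact (s * u)%g f = funact s (funact u f).
Proof. by apply/ffunP => t; rewrite !funactE invMg mulgA. Qed.
Lemma funactD s f g : funact s (f + g) = funact s f + funact s g.
Proof. by apply/ffunP => t; rewrite !(funactE, faddE). Qed.
Lemma funactMul s f g : funact s (f * g) = funact s f * funact s g.
Proof. by apply/ffunP => t; rewrite !(funactE, fmulE). Qed.
Lemma funactN s f : funact s (- f) = - funact s f.
Proof. by apply/ffunP => t; rewrite !(funactE, foppE). Qed.
Lemma funact0 s : funact s (0 : F) = 0.
Proof. by apply/ffunP => t; rewrite !(funactE, f0E). Qed.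

Lemma teval_deq n (x : 'I_n -> F) (t u : dterm F gT n) :
  deq t u -> teval (@funact gT L) x t = teval (@funact gT L) x u.
Proof.
elim => {t u} /=.
- by [].
- by move=> t u _ ->.
- by move=> t u v _ -> _ ->.
- by move=> t t' u u' _ -> _ ->.
- by move=> t t' u u' _ -> _ ->.
- by move=> t t' _ ->.
- by move=> *; rewrite addrA.
- by move=> *; rewrite addrC.
- by move=> *; rewrite add0r.
- by move=> *; rewrite subrr.
- by move=> *; rewrite mulrA.
- by move=> *; rewrite fmulC.
- by move=> *; rewrite mul1r.
- by move=> *; rewrite mulrDl.
- by [].
- by [].
- by [].
Qed.

Lemma teval_tact n (x : 'I_n -> F) s (t : dterm F gT n) :
  teval (@funact gT L) x (tact (@funact gT L) s t) = funact s (teval (@funact gT L) x t).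
Proof.
elim: t => //= [g i|t IHt u IHu|t IHt u IHu|t IHt].
- by rewrite funactM.
- by rewrite IHt IHu funactD.
- by rewrite IHt IHu funactMul.
- by rewrite IHt funactN.
Qed.

End Basics.

Lemma tover_tact (gT : finGroupType) (L : fieldType) (D : {ffun gT -> L} -> Prop)
  (HDsub : diff_subring (@funact gT L) D) n s (t : dterm _ gT n) :
  tover D t -> tover D (tact (@funact gT L) s t).
Proof.
have [_ [_ [_ [_ [_ Hact]]]]] := HDsub.
elim: t => /= [a|g i|t IHt u IHu|t IHt u IHu|t IHt].
- exact: Hact.
- by [].
- by case=> /IHt ? /IHu.
- by case=> /IHt ? /IHu.
- exact: IHt.
Qed.

Lemma teval_tpow1 (gT : finGroupType) (L : fieldType) n (x : 'I_n -> {ffun gT -> L}) k :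
  teval (@funact gT L) x (tpow (TConst 1) k) = 1.
Proof. by elim: k => //= k IH; rewrite IH mul1r. Qed.

Lemma exist_closed (gT : finGroupType) (L : fieldType) (D : {ffun gT -> L} -> Prop)
  (HDsub : diff_subring (@funact gT L) D)
  (HDcl : diff_closed (@funact gT L) D)
  n (Eqs : dterm {ffun gT -> L} gT n -> Prop)
  (HE : forall u, Eqs u -> tover D u)
  (y : 'I_n -> {ffun gT -> L})
  (Hy : forall u, Eqs u -> teval (@funact gT L) y u = 0) :
  exists x : 'I_n -> {ffun gT -> L}, (forall i, D (x i)) /\
    forall u, Eqs u -> teval (@funact gT L) x u = 0.
Proof.
set P := fun u => tover D u /\ forall z, (forall v, Eqs v -> teval (@funact gT L) z v = 0) ->
   teval (@funact gT L) z u = 0.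
have [D0 [D1 _]] := HDsub.
have HP : tdiff_ideal (@funact gT L) D P.
  split; first by move=> t [].
  split.
    move=> t u [_ Pt] tu dtu; split=> // z Hz.
    by rewrite -(teval_deq z dtu); apply: Pt.
  split; first by split=> //.
  split.
    move=> t u [Ht Pt] [Hu Pu]; split; first by split.
    by move=> z Hz /=; rewrite Pt // Pu // addr0.
  split.
    move=> t u Ht [Hu Pu]; split; first by split.
    by move=> z Hz /=; rewrite Pu // mulr0.
  move=> s t [Ht Pt]; split; first exact: tover_tact.
  by move=> z Hz; rewrite teval_tact Pt // funact0.
destruct (classic (exists x : 'I_n -> {ffun gT -> L}, (forall i, D (x i)) /\
    forall u, Eqs u -> teval (@funact gT L) x u = 0)) as [|Hno]; first by [].
exfalso.
have [_ [k [_ Pk]]] : trad D P (TConst 1).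
  apply/(HDcl n P HP (TConst 1)); split=> // x Dx Hx.
  exfalso; apply: Hno; exists x; split=> // u Eu; apply: Hx; split; first exact: HE.
  by move=> z Hz; apply: Hz.
have := Pk y Hy; rewrite teval_tpow1 => /ffunP /(_ 1%g).
by rewrite f1E f0E; apply/eqP; rewrite oner_eq0.
Qed.

Definition Eone (gT : finGroupType) (L : fieldType) : {ffun gT -> L} :=
  [ffun t => if t == 1%g then 1 else 0].

Fixpoint sumT (gT : finGroupType) (L : fieldType) n (i : 'I_n) (s : seq gT)
  : dterm {ffun gT -> L} gT n :=
  match s with [::] => TConst 0 | g :: s' => TAdd (TVar g i) (sumT L i s') end.

Lemma sumT_eval (gT : finGroupType) (L : fieldType) n (i : 'I_n) s (x : 'I_n -> {ffun gT -> L}) :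
  teval (@funact gT L) x (sumT L i s) = \sum_(g <- s) funact g (x i).
Proof. by elim: s => [|g s IH] /=; rewrite ?big_nil ?big_cons ?IH. Qed.

Lemma sumT_over (gT : finGroupType) (L : fieldType) (D : {ffun gT -> L} -> Prop)
  n (i : 'I_n) s : D 0 -> tover D (sumT L i s).
Proof. by move=> D0; elim: s => //= g s IH. Qed.

Lemma Eone_in (gT : finGroupType) (L : fieldType) (D : {ffun gT -> L} -> Prop)
  (HDsub : diff_subring (@funact gT L) D)
  (HDcl : diff_closed (@funact gT L) D) : D (Eone gT L).
Proof.
have [D0 [D1 [_ [_ [_ Dact]]]]] := HDsub.
pose X : dterm {ffun gT -> L} gT 1 := TVar 1%g ord0.
pose Eqs u := u = TAdd (TMul X X) (TOpp X) \/
   (exists s, s != 1%g /\ u = TMul (TVar s ord0) X) \/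
   u = TAdd (sumT L ord0 (index_enum gT)) (TOpp (TConst 1)).
have HE : forall u, Eqs u -> tover D u.
  move=> u [->|[[s [_ ->]]|->]] //=; split=> //; exact: sumT_over.
have [x [Dx Hx]] : exists x : 'I_1 -> {ffun gT -> L}, (forall i, D (x i)) /\
    forall u, Eqs u -> teval (@funact gT L) x u = 0.
  apply: (exist_closed HDsub HDcl HE (y := fun _ => Eone gT L)).
  move=> u [->|[[s [s1 ->]]|->]] /=; rewrite ?funact1 ?sumT_eval;
    apply/ffunP => t; rewrite ?(faddE, fmulE, foppE, f0E, f1E, funactE, sum_ffunE) /Eone.
  - by rewrite !ffunE; case: (t == 1%g); rewrite ?mul1r ?mul0r subrr.
  - rewrite !ffunE; case: (t =P 1%g) => [->|]; last by rewrite mulr0.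
    by rewrite mulg1 invg_eq1 (negPf s1) mulr1.
  - rewrite (bigD1 t) //= big1 ?addr0 ?funactE ?ffunE ?mulVg ?eqxx ?subrr //.
    move=> g gt; rewrite funactE ffunE; case: eqP => // /eqP.
    by rewrite -eq_mulVg1 (negPf gt).
pose e := x ord0.
have Ha : forall t, e t = 0 \/ e t = 1.
  move=> t; have := Hx _ (or_introl erefl); rewrite /= funact1 => /ffunP /(_ t).
  rewrite !(faddE, fmulE, foppE, f0E) -{3}(mulr1 (x ord0 t)) -mulrBr => /eqP.
  by rewrite mulf_eq0 subr_eq0 => /orP [/eqP ->|/eqP <-]; [left|right].
have Hb : forall s t, s != 1%g -> e (s^-1 * t)%g * e t = 0.
  move=> s t s1; have := Hx _ (or_intror (or_introl (ex_intro _ s (conj s1 erefl)))).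
  by rewrite /= funact1 => /ffunP /(_ t); rewrite fmulE funactE f0E.
have [t0 et0] : exists t0, e t0 = 1.
  have := Hx _ (or_intror (or_intror erefl)); rewrite /= sumT_eval => /ffunP /(_ 1%g).
  rewrite faddE foppE sum_ffunE f1E f0E => /eqP; rewrite subr_eq0 => /eqP Hs.
  apply: NNPP => Hno; move: Hs; rewrite big1 => [/eqP|g _].
    by rewrite eq_sym oner_eq0.
  rewrite funactE; have [//|H1] := Ha (g^-1 * 1)%g; exfalso; apply: Hno; by eexists; exact: H1.
have -> : Eone gT L = funact t0^-1 e.
  apply/ffunP => t; rewrite funactE invgK ffunE.
  case: (t =P 1%g) => [->|/eqP t1]; first by rewrite mulg1 et0.
  have := Hb (t ^ t0^-1)%g (t0 * t)%g; rewrite conjg_eq1 => /(_ t1).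
  have -> : ((t ^ t0^-1)^-1 * (t0 * t))%g = t0.
    by rewrite conjgE !invMg !invgK !mulgA mulgKV mulgKV.
  by rewrite et0 mul1r.
exact/Dact/Dx.
Qed.

Fixpoint hornerT (gT : finGroupType) (L : fieldType) n (Gs : seq {ffun gT -> L})
  (X : dterm {ffun gT -> L} gT n) : dterm {ffun gT -> L} gT n :=
  match Gs with [::] => TConst 0 | g :: gs => TAdd (TMul (hornerT gs X) X) (TConst g) end.

Definition prodT (gT : finGroupType) (L : fieldType) n (Gs : seq {ffun gT -> L})
  (X : dterm {ffun gT -> L} gT n) : dterm {ffun gT -> L} gT n :=
  foldr (fun g acc => TMul (TAdd X (TOpp (TConst g))) acc) (TConst 1) Gs.

Lemma hornerT_eval (gT : finGroupType) (L : fieldType) n Gs X (x : 'I_n -> {ffun gT -> L}) t :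
  (teval (@funact gT L) x (hornerT Gs X)) t =
  horner_rec (map (fun g : {ffun gT -> L} => g t) Gs) (teval (@funact gT L) x X t).
Proof. by elim: Gs => [|g gs IH] /=; rewrite ?f0E // faddE fmulE IH. Qed.

Lemma prodT_eval (gT : finGroupType) (L : fieldType) n Gs X (x : 'I_n -> {ffun gT -> L}) t :
  (teval (@funact gT L) x (prodT Gs X)) t =
  \prod_(g <- Gs) (teval (@funact gT L) x X t - g t).
Proof.
by elim: Gs => [|g gs IH] /=; rewrite ?big_nil ?f1E // big_cons fmulE IH faddE foppE.
Qed.

Lemma hornerT_over (gT : finGroupType) (L : fieldType) (D : {ffun gT -> L} -> Prop) n Gs
  (X : dterm _ gT n) : D 0 -> tover D X -> (forall g, g \in Gs -> D g) -> tover D (hornerT Gs X).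
Proof.
move=> D0 DX; elim: Gs => [|g gs IH] //= Hg; split; last by apply: Hg; rewrite inE eqxx.
by split=> //; apply: IH => h hin; apply: Hg; rewrite inE hin orbT.
Qed.

Lemma prodT_over (gT : finGroupType) (L : fieldType) (D : {ffun gT -> L} -> Prop) n Gs
  (X : dterm _ gT n) : D 1 -> tover D X -> (forall g, g \in Gs -> D g) -> tover D (prodT Gs X).
Proof.
move=> D1 DX; elim: Gs => [|g gs IH] //= Hg; split; first by split=> //; apply: Hg; rewrite inE eqxx.
by apply: IH => h hin; apply: Hg; rewrite inE hin orbT.
Qed.

Definition Kp (gT : finGroupType) (L : fieldType) (D : {ffun gT -> L} -> Prop) (z : L) :=
  exists f, D f /\ f 1%g = z.

Lemma lift_list (gT : finGroupType) (L : fieldType) (D : {ffun gT -> L} -> Prop) (l : seq L) :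
  (forall c, c \in l -> Kp D c) ->
  exists Gs : seq {ffun gT -> L}, (forall g, g \in Gs -> D g) /\ map (fun g : {ffun gT -> L} => g 1%g) Gs = l.
Proof.
elim: l => [|c l IH] H; first by exists [::].
have [f [Df fc]] := H c (mem_head _ _).
have [Gs [DG mG]] : exists Gs : seq {ffun gT -> L}, (forall g, g \in Gs -> D g) /\ map (fun g : {ffun gT -> L} => g 1%g) Gs = l.
  by apply: IH => c' c'in; apply: H; rewrite inE c'in orbT.
exists (f :: Gs); split; last by rewrite /= fc mG.
by move=> g; rewrite inE => /orP [/eqP ->|]; [|apply: DG].
Qed.

Lemma new_root (gT : finGroupType) (L : fieldType) (D : {ffun gT -> L} -> Prop)
  (HDsub : diff_subring (@funact gT L) D)
  (HDcl : diff_closed (@funact gT L) D)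
  (p : {poly L}) (Hp : forall c, c \in (p : seq L) -> Kp D c)
  (s : seq L) (Hs : forall r, r \in s -> Kp D r) (z : L) (rz : root p z) (zs : z \notin s) :
  exists r, Kp D r /\ root p r /\ r \notin s.
Proof.
have [D0 [D1 _]] := HDsub.
have DE := Eone_in HDsub HDcl.
have [Gp [DGp mGp]] := lift_list Hp.
have [Gs [DGs mGs]] := lift_list Hs.
pose X : dterm {ffun gT -> L} gT 2 := TVar 1%g ord0.
pose W : dterm {ffun gT -> L} gT 2 := TVar 1%g ord_max.
pose Eqs u := u = TMul (TConst (Eone gT L)) (hornerT Gp X) \/
   u = TAdd (TMul (TMul W (prodT Gs X)) (TConst (Eone gT L))) (TOpp (TConst (Eone gT L))).
have HE : forall u, Eqs u -> tover D u.
  move=> u [->|->] /=.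
    by split=> //; apply: hornerT_over.
  by split=> //; split=> //; split=> //; apply: prodT_over.
pose c := \prod_(r <- s) (z - r).
have c0 : c != 0.
  rewrite prodf_seq_neq0; apply/allP => r rin /=; rewrite subr_eq0.
  by apply/eqP => zr; move: zs; rewrite zr rin.
pose y (i : 'I_2) : {ffun gT -> L} := if i == ord0 then [ffun _ => z] else [ffun _ => c^-1].
have [x [Dx Hx]] : exists x : 'I_2 -> {ffun gT -> L}, (forall i, D (x i)) /\
    forall u, Eqs u -> teval (@funact gT L) x u = 0.
  apply: (exist_closed HDsub HDcl HE (y := y)).
  move=> u [->|->]; apply/ffunP => t.
    rewrite /= fmulE hornerT_eval /= funact1 /y /= f0E !ffunE.
    case: (t =P 1%g) => [->|]; last by rewrite mul0r.
    have -> : map (fun g : {ffun gT -> L} => g 1%g) Gp = p by [].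
    by rewrite mul1r; move/eqP: rz.
  rewrite /= faddE !fmulE prodT_eval /= !funact1 /y /= foppE f0E !ffunE.
  case: (t =P 1%g) => [->|]; last by rewrite !mulr0 subr0.
  have -> : \prod_(g <- Gs) (z - g 1%g) = c by rewrite /c -mGs big_map.
  by rewrite mulVf // mulr1 subrr.
exists (x ord0 1%g); split; first by exists (x ord0).
split.
  have := Hx _ (or_introl erefl) => /ffunP /(_ 1%g).
  rewrite /= fmulE hornerT_eval /= funact1 f0E ffunE eqxx mul1r => H.
  rewrite rootE; change (horner_rec (polyseq p) (x ord0 1%g) == 0); rewrite -mGp; exact/eqP.
have := Hx _ (or_intror erefl) => /ffunP /(_ 1%g).
rewrite /= faddE !fmulE prodT_eval /= !funact1 foppE f0E !ffunE eqxx mulr1.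
have -> : \prod_(g <- Gs) (x ord0 1%g - g 1%g) = \prod_(r <- s) (x ord0 1%g - r) by rewrite -mGs big_map.
move=> /eqP; rewrite subr_eq0 => /eqP H.
apply/negP => xin.
have : \prod_(r <- s) (x ord0 1%g - r) == 0.
  by rewrite prodf_seq_eq0; apply/hasP; exists (x ord0 1%g) => //=; rewrite subrr.
by move/eqP => H0; move: H; rewrite H0 mulr0 => /eqP; rewrite eq_sym oner_eq0.
Qed.

Theorem proposition4p14 (gT : finGroupType) (A : comNzRingType) (actA : gT -> A -> A)
  (HactA : diff_action actA)
  (HA : pseudofield actA (fun _ => True))
  (m : A -> Prop) (Hm : maximal_ideal m)
  (L : closedFieldType) (phi : {rmorphism A -> L})
  (Hker : forall a, phi a = 0 <-> m a)
  (Halg : forall z : L, exists p : {poly L},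
     p != 0 /\ (forall i, exists a, p`_i = phi a) /\ root p z)
  (D : {ffun gT -> L} -> Prop)
  (HDsub : diff_subring (@funact gT L) D)
  (HDpf : pseudofield (@funact gT L) D)
  (HDcl : diff_closed (@funact gT L) D)
  (HAD : forall a, D (taylor actA phi a)) :
  forall f : {ffun gT -> L}, D f.
Proof.
have [D0 [D1 [_ [Dadd [Dmul Dact]]]]] := HDsub.
have Kall : forall z, Kp D z.
  move=> z; have [p [p0 [Hc rz]]] := Halg z.
  have Hp : forall c, c \in (p : seq L) -> Kp D c.
    move=> c cin; have [a Ha] := Hc (index c p).
    exists (taylor actA phi a); split=> //.
    by rewrite ffunE invg1 HactA.1 -Ha nth_index.
  suff : forall k, Kp D z \/ exists s, uniq s /\ size s = k /\
      (forall r, r \in s -> Kp D r /\ root p r).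
    case/(_ (size p)) => [//|[s [us [ss Hs]]]]; exfalso.
    have Hall : all (root p) s by apply/allP => r /Hs [].
    by have := max_poly_roots p0 Hall us; rewrite ss ltnn.
  elim=> [|k [|[s [us [ss Hs]]]]]; [right; exists [::]; by split| by left|].
  destruct (classic (Kp D z)) as [Kz|nKz]; first by left.
  have zs : z \notin s by apply/negP => /Hs [].
  have [r [Kr [rr rs]]] := new_root HDsub HDcl Hp (fun r rin => (Hs r rin).1) rz zs.
  right; exists (r :: s); split; first by rewrite /= rs.
  split; first by rewrite /= ss.
  by move=> r'; rewrite inE => /orP [/eqP ->|/Hs].
move=> f.
have DE := Eone_in HDsub HDcl.
have Hloc : forall tau, exists h, D h /\ forall t, h t = if t == tau then f tau else 0.
  move=> tau; have [g [Dg g1]] := Kall (f tau).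
  exists (funact tau (g * Eone gT L)); split; first by apply: Dact; apply: Dmul.
  move=> t; rewrite funactE fmulE ffunE -eq_mulVg1.
  by rewrite eq_sym; case: (t =P tau) => [->|]; rewrite ?mulVg ?g1 ?mulr1 ?mulr0.
have Hs : forall s : seq gT, exists h, D h /\ forall t, h t = if t \in s then f t else 0.
  elim=> [|tau s [h [Dh Hh]]].
    by exists 0; split=> // t; rewrite f0E.
  destruct (classic (tau \in s)) as [ts|nts].
    exists h; split=> // t; rewrite Hh inE; case: (t =P tau) => [->|] //=.
    by rewrite ts.
  have [h' [Dh' Hh']] := Hloc tau.
  exists (h + h'); split; first exact: Dadd.
  move=> t; rewrite faddE Hh Hh' inE; case: (t =P tau) => [->|] /=.
    by move/negP/negPf: nts => ->; rewrite add0r.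
  by rewrite addr0.
have [h [Dh Hh]] := Hs (enum gT).
suff -> : f = h by [].
by apply/ffunP => t; rewrite Hh mem_enum.
Qed.
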